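(* Let $T:\mathcal P(\mathbb R^n)\to\mathcal P(\mathbb R^n)$ be given by $TA=\{y\in\mathbb R^n:\ \langle x,y\rangle\ge 1\ \forall x\in A\}$. Then the class $\mathcal C=\{TK:K\subseteq\mathbb R^n\}$ consists exactly of $\mathbb R^n$ together with all closed convex sets $K\subseteq\mathbb R^n$ such that $0\notin K$ and $\lambda K\subseteq K$ for all $\lambda\ge 1$.
   Context: $\mathcal P(\mathbb R^n)$ is the power set of $\mathbb R^n$ and $\langle\cdot,\cdot\rangle$ the standard inner product. *)

(* Defs.v *)
From HB Require Import structures.
From mathcomp Require Import all_boot all_order all_algebra.
From mathcomp Require Import all_classical all_reals all_analysis.
Set Implicit Arguments. Unset Strict Implicit. Unset Printing Implicit Defensive.
Import Order.TTheory GRing.Theory Num.Theory.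
Import numFieldNormedType.Exports.
Local Open Scope classical_set_scope.
Local Open Scope ring_scope.

Definition inner (R : realType) (n : nat) (x y : 'rV[R]_n) : R :=
  \sum_(i < n) x 0 i * y 0 i.

Definition polarT (R : realType) (n : nat) (A : set 'rV[R]_n) : set 'rV[R]_n :=
  [set y | forall x, A x -> 1 <= inner x y].

(* Main.v *)
Require Import Defs.
From HB Require Import structures.
From mathcomp Require Import all_boot all_order all_algebra.
From mathcomp Require Import all_classical all_reals all_analysis.
Import Order.TTheory GRing.Theory Num.Theory.
Import numFieldNormedType.Exports.
Local Open Scope classical_set_scope.
Local Open Scope ring_scope.
From mathcomp Require Import ring lra.
Set Implicit Arguments. Unset Strict Implicit.
Local Open Scope convex_scope.
Section Inner.
Variables (R : realType) (n : nat).
Implicit Types x y z : 'rV[R]_n.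

Lemma innerC x y : inner x y = inner y x.
Proof. by apply: eq_bigr => i _; rewrite mulrC. Qed.

Lemma innerDr x y z : inner x (y + z) = inner x y + inner x z.
Proof. by rewrite /inner -big_split; apply: eq_bigr => i _; rewrite mxE mulrDr. Qed.

Lemma innerZr x a y : inner x (a *: y) = a * inner x y.
Proof. by rewrite /inner mulr_sumr; apply: eq_bigr => i _; rewrite mxE mulrCA. Qed.

Lemma innerNr x y : inner x (- y) = - inner x y.
Proof. by rewrite /inner -sumrN; apply: eq_bigr => i _; rewrite mxE mulrN. Qed.

Lemma innerBr x y z : inner x (y - z) = inner x y - inner x z.
Proof. by rewrite innerDr innerNr. Qed.

Lemma innerDl x y z : inner (y + z) x = inner y x + inner z x.
Proof. by rewrite innerC innerDr !(innerC x). Qed.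
Lemma innerZl x a y : inner (a *: y) x = a * inner y x.
Proof. by rewrite innerC innerZr innerC. Qed.
Lemma innerBl x y z : inner (y - z) x = inner y x - inner z x.
Proof. by rewrite innerC innerBr !(innerC x). Qed.

Lemma inner0r x : inner x 0 = 0.
Proof. by rewrite /inner big1 // => i _; rewrite mxE mulr0. Qed.
Lemma inner0l x : inner 0 x = 0.
Proof. by rewrite innerC inner0r. Qed.

Lemma inner_ge0 x : 0 <= inner x x.
Proof. by apply: sumr_ge0 => i _; rewrite -expr2 sqr_ge0. Qed.

Lemma inner_sq x i : x 0 i * x 0 i <= inner x x.
Proof.
rewrite /inner (bigD1 i) //= lerDl; apply: sumr_ge0 => j _; by rewrite -expr2 sqr_ge0.
Qed.

Lemma inner_eq0 x : inner x x = 0 -> x = 0.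
Proof.
move=> /eqP; rewrite psumr_eq0; last by move=> i _; rewrite -expr2 sqr_ge0.
move=> /allP H; apply/rowP => i; rewrite mxE.
have /H : i \in index_enum 'I_n by rewrite mem_index_enum.
by rewrite /= mulf_eq0 orbb => /eqP.
Qed.

Lemma sum_continuous (F : 'I_n -> 'rV[R]_n -> R) (r : seq 'I_n) :
  (forall i, continuous (F i)) -> continuous (fun v => \sum_(i <- r) F i v).
Proof.
move=> Fc; elim: r => [|i r IH].
  have -> : (fun v => \sum_(i <- [::]) F i v) = fun _ => 0.
    by apply: funext => v; rewrite big_nil.
  exact: cst_continuous.
have -> : (fun v => \sum_(j <- i :: r) F j v) = fun v => F i v + \sum_(j <- r) F j v.
  by apply: funext => v; rewrite big_cons.
by move=> v; exact: (continuousD (Fc i v) (IH v)).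
Qed.

Lemma inner_continuous x : continuous (fun y => inner x y).
Proof.
apply: sum_continuous => i v.
have := continuousM (@cst_continuous _ R^o (x 0 i) v) (@coord_continuous R 1 n 0 i v).
exact.
Qed.

Lemma dist_continuous y : continuous (fun c : 'rV[R]_n => inner (c - y) (c - y)).
Proof.
apply: sum_continuous => i v.
have h : continuous (fun c : 'rV[R]_n => (c - y) 0 i).
  move=> w; apply: (@continuous_comp _ _ _ (fun c : 'rV[R]_n => c - y) (fun c : 'rV[R]_n => c 0 i)).
    have := continuousB (f:=id) (g:=fun=> y) (x:=w) cvg_id (@cst_continuous _ _ y w); exact.
  exact: coord_continuous.
exact: (continuousM (h v) (h v)).
Qed.

End Inner.
Section Proj.
Variables (R : realType) (n : nat).

Lemma exists_min (C : set 'rV[R]_n) (y c0 : 'rV[R]_n) : closed C -> C c0 ->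
  exists2 p, C p & forall c, C c -> inner (p - y) (p - y) <= inner (c - y) (c - y).
Proof.
move=> Ccl Cc0.
pose f := fun c : 'rV[R]_n => inner (c - y) (c - y).
pose r := f c0 + 1.
have r1 : 1 <= r by rewrite /r lerDr inner_ge0.
pose A := [set v : 'rV[R]_n | forall i, `[y ord0 i - r, y ord0 i + r]%classic (v ord0 i)].
have Acp : compact A.
  exact: (@rV_compact _ n (fun i => `[y ord0 i - r, y ord0 i + r]%classic) (fun i => @segment_compact _ _ _)).
have Bcp : compact (A `&` C) by apply: compact_closedI.
have inA : forall c, C c -> f c <= f c0 -> A c.
  move=> c Cc fc i /=; rewrite in_itv /=.
  have := inner_sq (c - y) i; rewrite !mxE => h.
  have h2 : (c ord0 i - y ord0 i) * (c ord0 i - y ord0 i) < r.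
    by rewrite /r; move: h fc; rewrite /f => h fc; lra.
  apply/andP; split; nra.
have B0 : (A `&` C) !=set0 by exists c0; split => //; apply: inA.
have fc : {within A `&` C, continuous f}.
  by apply: continuous_subspaceT; exact: dist_continuous.
have [p /set_mem [Ap Cp] pmin] := EVT_min_rV B0 Bcp fc.
exists p => // c Cc.
have [hc|hc] := leP (f c) (f c0).
  by apply: pmin; apply/mem_set; split => //; exact: inA.
apply: le_trans (ltW hc); apply: pmin; apply/mem_set; split => //; exact: inA.
Qed.

End Proj.
Section Proj2.
Variables (R : realType) (n : nat).

Lemma conv_rV (x y : 'rV[R]_n) (l : {i01 R}) :
  ((x : convex_lmodType 'rV[R]_n) <| l |> y) = l%:num *: x + (1 - l%:num) *: y.
Proof. by []. Qed.

Lemma inner_exp (e d : 'rV[R]_n) t :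
  inner (e + t *: d) (e + t *: d) = inner e e + t * (2 * inner d e + t * inner d d).
Proof.
rewrite innerDl !innerDr !innerZl !innerZr (innerC e d); ring.
Qed.

Lemma proj_cvx (C : set 'rV[R]_n) (y c0 : 'rV[R]_n) : closed C -> convex_set C -> C c0 ->
  exists2 p, C p & forall c, C c -> 0 <= inner (c - p) (p - y).
Proof.
move=> Ccl Ccv Cc0.
have [p Cp pmin] := exists_min y Ccl Cc0.
exists p => // c Cc.
rewrite leNgt; apply/negP => hneg.
set d := c - p in hneg *; set e := p - y in hneg *.
set dd := inner d d; set de := inner d e in hneg *.
have dd0 : 0 <= dd by apply: inner_ge0.
have den : 0 < dd - de by lra.
pose t := - de / (dd - de).
have ht : t * (dd - de) = - de by rewrite /t divfK // gt_eqF.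
have t0 : 0 < t by rewrite /t divr_gt0 // oppr_gt0.
have t1 : t <= 1 by rewrite -(ler_pM2r den) mul1r ht; lra.
have tdd : t * dd <= - de.
  have : t * de < 0 by rewrite pmulr_rlt0.
  move: ht; rewrite mulrBr; lra.
have Cz : C (t *: c + (1 - t) *: p).
  have := Ccv c p (Itv01 (ltW t0) t1).
  by rewrite conv_rV /= !inE; apply.
have := pmin _ Cz.
have -> : t *: c + (1 - t) *: p - y = e + t *: d.
  by apply/rowP => j; rewrite /e /d !mxE; ring.
rewrite inner_exp -/e -/dd -/de => h.
have h2 : t * (t * dd) <= t * (- de) by rewrite ler_pM2l.
nra.
Qed.

End Proj2.
Section Sep.
Variables (R : realType) (n : nat).

Lemma sep (C : set 'rV[R]_n) (y : 'rV[R]_n) : closed C -> convex_set C -> ~ C 0 ->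
  (forall (l : R) (x : 'rV[R]_n), 1 <= l -> C x -> C (l *: x)) -> ~ C y ->
  exists x, (forall c, C c -> 1 <= inner c x) /\ inner y x < 1.
Proof.
move=> Ccl Ccv nC0 Csc nCy.
have [[c0 Cc0]|Ce] := pselect (exists c, C c); last first.
  exists 0; split; first by move=> c Cc; exfalso; apply: Ce; exists c.
  by rewrite inner0r ltr01.
have [p Cp hp] := proj_cvx y Ccl Ccv Cc0.
have [q Cq hq] := proj_cvx 0 Ccl Ccv Cc0.
pose a := p - y.
pose b := inner p a.
have hb : forall c, C c -> b <= inner c a.
  by move=> c /hp; rewrite innerBl subr_ge0.
have b0 : 0 <= b.
  have := hb _ (Csc 2 p (ler1n _ 2) Cp); rewrite innerZl -/b; lra.
have aa0 : 0 < inner a a.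
  rewrite lt_neqAle inner_ge0 andbT eq_sym; apply/eqP => /inner_eq0 /eqP.
  by rewrite subr_eq0 => /eqP pe; apply: nCy; rewrite -pe.
have ya : inner y a = b - inner a a.
  have -> : y = p - a by apply/rowP => j; rewrite /a !mxE; ring.
  by rewrite innerBl.
pose g := inner q q.
have g0 : 0 < g.
  rewrite lt_neqAle inner_ge0 andbT eq_sym; apply/eqP => /inner_eq0 q0.
  by apply: nC0; rewrite -q0.
have hg : forall c, C c -> g <= inner c q.
  by move=> c /hq; rewrite subr0 innerBl subr_ge0.
pose s := inner y q - g.
pose eps := inner a a / (`|s| + 1).
have s1 : 0 < `|s| + 1 by rewrite ltr_wpDl.
have eps0 : 0 < eps by rewrite divr_gt0.
have epss : eps * s < inner a a.
  have h1 : eps * (`|s| + 1) = inner a a by rewrite /eps divfK // gt_eqF.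
  have h2 : s <= `|s| := ler_norm s.
  have h3 : eps * s <= eps * `|s| by rewrite ler_pM2l.
  lra.
pose D := b + eps * g.
have D0 : 0 < D by rewrite /D ltr_wpDl // mulr_gt0.
exists (D^-1 *: (a + eps *: q)); split.
  move=> c Cc; rewrite innerZr innerDr innerZr.
  rewrite -(ler_pM2l D0) mulrA mulfV ?gt_eqF // mul1r mulr1.
  have := hb _ Cc; have := hg _ Cc => h1 h2.
  have : eps * g <= eps * inner c q by rewrite ler_pM2l.
  rewrite /D; lra.
rewrite innerZr innerDr innerZr ya.
rewrite -(ltr_pM2l D0) mulrA mulfV ?gt_eqF // mul1r mulr1.
move: epss; rewrite /D /s; lra.
Qed.

End Sep.

Unset Implicit Arguments.

Theorem lemma5p1 (R : realType) (n : nat) (C : set 'rV[R]_n) :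
  (exists K : set 'rV[R]_n, C = polarT K) <->
  (C = setT \/
   (closed C /\ convex_set C /\ ~ C 0 /\
    (forall (l : R) (x : 'rV[R]_n), 1 <= l -> C x -> C (l *: x)))).
Proof.
split.
  move=> [K ->].
  have [[k Kk]|Ke] := pselect (exists k, K k); last first.
    left; apply/seteqP; split => // y _ x Kx; exfalso; apply: Ke; by exists x.
  right; split.
    have -> : polarT K = \bigcap_(x in K) ((fun y => inner x y) @^-1` [set r | 1 <= r]).
      by [].
    apply: closed_bigI => x _; apply: preimage_closed; last exact: closed_ge.
    by move=> v _; exact: inner_continuous.
  split.
    move=> x y l; rewrite !inE => hx hy; rewrite (conv_rV x y l) => z Kz.
    rewrite innerDr !innerZr.
    have := hx _ Kz; have := hy _ Kz => h1 h2.
    have l0 : 0 <= l%:num by [].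
    have l1 : l%:num <= 1 by [].
    nra.
  split.
    by move=> /(_ _ Kk); rewrite inner0r ler10.
  move=> l x l1 hx z Kz; rewrite innerZr; have := hx _ Kz; nra.
move=> [->|[Ccl [Ccv [nC0 Csc]]]].
  exists set0; apply/seteqP; split => // y _ x; by case.
exists (polarT C); apply/seteqP; split.
  by move=> y Cy x Px; rewrite innerC; apply: Px.
move=> y Py; apply: contrapT => nCy.
have [x [hx hy]] := sep Ccl Ccv nC0 Csc nCy.
have := Py x hx; rewrite innerC; lra.
Qed.
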